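(* Let $(t_1,s_1),(t_2,s_2)\in\mathbb{C}^\times\times\mathbb{C}^\times$ with $t_1\ne t_2$ and $s_1\neq s_2$, let $X_1=A_2(t_1,s_1)$, $X_2=A_2(t_2,s_2)$, $T=X_1+X_2$, and $\varepsilon_0=\det(X_1)+\det(X_2)-\det(X_1+X_2)$. Then for all $n\in\mathbb{N}$, $T^{2n}=(\varepsilon_0+2)^nI_2$ and $T^{2n+1}=(\varepsilon_0+2)^nT$.
   Context: $\mathbb{C}^\times=\mathbb{C}\setminus\{0\}$; $A_2(t,s)=\begin{pmatrix} t & s\\ \frac{1-t^2}{s} & -t\end{pmatrix}$; $I_2$ is the $2\times2$ identity matrix. *)

(* Defs.v *)
From HB Require Import structures.
From mathcomp Require Import all_boot all_algebra.
From mathcomp Require Import complex Rstruct.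
Set Implicit Arguments. Unset Strict Implicit. Unset Printing Implicit Defensive.
Import GRing.Theory Num.Theory.
Local Open Scope ring_scope.

Definition CC : numClosedFieldType := (Rdefinitions.R)[i].

Definition A2 (t s : CC) : 'M[CC]_2 :=
  \matrix_(i < 2, j < 2)
    if (i == 0) && (j == 0) then t
    else if (i == 0) then s
    else if (j == 0) then (1 - t ^+ 2) / s
    else - t.

(* Main.v *)
Require Import Defs.
From HB Require Import structures.
From mathcomp Require Import all_boot all_algebra.
From mathcomp Require Import complex Rstruct.
From mathcomp Require Import ring.
Import GRing.Theory Num.Theory.
Local Open Scope ring_scope.

Lemma det2 (A : 'M[CC]_2) : \det A = A 0 0 * A 1 1 - A 0 1 * A 1 0.
Proof.
rewrite (expand_det_row _ 0) !big_ord_recr big_ord0 /= add0r.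
rewrite /cofactor !det_mx11 !mxE /=.
have e1 : (lift 0 0 : 'I_2) = 1 by apply/val_inj.
have e2 : (lift (widen_ord (m:=2) (leqnSn 1) ord_max) 0 : 'I_2) = 1 by apply/val_inj.
have e3 : (lift ord_max 0 : 'I_2) = 0 by apply/val_inj.
have e4 : (widen_ord (m:=2) (leqnSn 1) ord_max : 'I_2) = 0 by apply/val_inj.
have e5 : (ord_max : 'I_2) = 1 by apply/val_inj.
rewrite e1 e2 e3 e4 e5 /= expr0 expr1. ring.
Qed.

Theorem mainTheorem13 (t1 s1 t2 s2 : CC)
  (ht1 : t1 != 0) (hs1 : s1 != 0) (ht2 : t2 != 0) (hs2 : s2 != 0)
  (ht : t1 != t2) (hs : s1 != s2) :
  let X1 := A2 t1 s1 in
  let X2 := A2 t2 s2 in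
  let T := X1 + X2 in
  let eps0 := \det X1 + \det X2 - \det (X1 + X2) in
  forall n : nat,
    T ^+ (2 * n) = ((eps0 + 2) ^+ n)%:M /\
    T ^+ (2 * n + 1) = (eps0 + 2) ^+ n *: T.
Proof.
move=> X1 X2 T eps0.
have H2 : T ^+ 2 = (eps0 + 2)%:M.
  rewrite /eps0 /T /X1 /X2 !det2 expr2.
  apply/matrixP => i j; rewrite !mxE !big_ord_recr big_ord0 /= ?mxE /=.
  case: i => [[|[|//]] ?]; case: j => [[|[|//]] ?] /=;
  rewrite ?mxE /=; field; by rewrite ?hs1 ?hs2.
clearbody T eps0; move=> n.
have E : T ^+ (2 * n) = ((eps0 + 2) ^+ n)%:M.
  by rewrite exprM H2 rmorphXn.
split=> //.
rewrite exprD E expr1 -scalemx1 -scalerAl mul1r. reflexivity.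
Qed.
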